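(* Let $M(C,\bar\xi,\pi)$ be a Myller configuration with Darboux frame $(\bar\xi,\bar\mu,\bar v)$ and invariants $G,K,T$ such that $(G(s),K(s))\neq(0,0)$ for all $s$, and let $\bar W_n$ be its unit ND-vector field. Then $C$ is a $W_n$-helix in $M$ if and only if $C$ is a $\bar\xi$-helix in $M$.
   Context: Let $C$ be a smooth curve in $E^3$ parametrized by arclength $s$; primes denote $d/ds$. A Myller configuration $M(C,\bar\xi,\pi)$ consists of a smooth unit vector field $\bar\xi(s)$ along $C$ and a smooth field of oriented planes $\pi(s)$ with $\bar\xi(s)\in\pi(s)$. Let $\bar v$ be the unit normal of $\pi$ and $\bar\mu=\bar v\times\bar\xi$. The Darboux frame satisfies $\bar\xi'=G\bar\mu+K\bar v$, $\bar\mu'=-G\bar\xi+T\bar v$, $\bar v'=-K\bar\xi-T\bar\mu$. The normal-type Darboux vector (ND-vector) is $W_n=-K\bar\mu+G\bar v$ and $\bar W_n=W_n/\|W_n\|$. $C$ is a $W_n$-helix in $M$ if $\bar W_n$ makes a constant angle with a fixed unit direction $\bar l_n$ (i.e. $\langle\bar W_n,\bar l_n\rangle$ is constant, $\bar l_n$ a constant unit vector). $C$ is a $\bar\xi$-helix in $M$ if $\langle\bar\xi,\bar d_\xi\rangle$ is constant for some constant unit vector $\bar d_\xi$. *)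

(* Defs.v *)
From HB Require Import structures.
From mathcomp Require Import all_boot all_order all_algebra.
From mathcomp Require Import all_classical all_reals all_analysis.
Set Implicit Arguments. Unset Strict Implicit. Unset Printing Implicit Defensive.
Import Order.TTheory GRing.Theory Num.Theory.
Import numFieldNormedType.Exports.
Local Open Scope ring_scope.

Section Myller.
Variable R : realType.
Notation vec := 'rV[R]_3.

Definition dotp (u w : vec) : R := \sum_(i < 3) u 0 i * w 0 i.

Definition co (u : vec) (k : nat) : R := u 0 (inord (k %% 3)).

Definition cross (u w : vec) : vec :=
  \row_(j < 3) (co u j.+1 * co w j.+2 - co u j.+2 * co w j.+1).

Definition smooth_on {V : normedModType R} (a b : R) (f : R -> V) : Prop :=
  forall (n : nat) (x : R), a < x < b -> derivable (derive1n n f) x 1.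

(* Myller configuration M(C, xi, pi) over the parameter interval ]a,b[ :
   C = c is parametrized by arclength, xi is a smooth unit vector field along C,
   the oriented plane field pi is given by its smooth unit normal field v,
   and xi(s) lies in pi(s), i.e. xi(s) is orthogonal to v(s). *)
Definition myller_config (a b : R) (c xi v : R -> vec) : Prop :=
  a < b /\
  smooth_on a b c /\ smooth_on a b xi /\ smooth_on a b v /\
  (forall s, a < s < b ->
     [/\ dotp (derive1 c s) (derive1 c s) = 1,
         dotp (xi s) (xi s) = 1,
         dotp (v s) (v s) = 1 &
         dotp (xi s) (v s) = 0]).

Definition frame_mu (xi v : R -> vec) : R -> vec := fun s => cross (v s) (xi s).

(* Invariants G, K, T, defined by xi' = G mu + K v, mu' = -G xi + T v,
   v' = -K xi - T mu  (i.e. G = <xi',mu>, K = <xi',v>, T = <mu',v>). *)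
Definition myG (xi v : R -> vec) (s : R) : R := dotp (derive1 xi s) (frame_mu xi v s).
Definition myK (xi v : R -> vec) (s : R) : R := dotp (derive1 xi s) (v s).
Definition myT (xi v : R -> vec) (s : R) : R :=
  dotp (derive1 (frame_mu xi v) s) (v s).

Definition ND_vector (xi v : R -> vec) (s : R) : vec :=
  - (myK xi v s) *: frame_mu xi v s + myG xi v s *: v s.
Definition unit_ND_vector (xi v : R -> vec) (s : R) : vec :=
  (Num.sqrt (dotp (ND_vector xi v s) (ND_vector xi v s)))^-1 *: ND_vector xi v s.

Definition Wn_helix (a b : R) (xi v : R -> vec) : Prop :=
  exists l : vec, dotp l l = 1 /\
    exists k : R, forall s, a < s < b -> dotp (unit_ND_vector xi v s) l = k.

Definition xi_helix (a b : R) (xi : R -> vec) : Prop :=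
  exists d : vec, dotp d d = 1 /\
    exists k : R, forall s, a < s < b -> dotp (xi s) d = k.

End Myller.

(* Main.v *)
Require Import Defs.
From HB Require Import structures.
From mathcomp Require Import all_boot all_order all_algebra.
From mathcomp Require Import all_classical all_reals all_analysis.
From mathcomp Require Import ring lra.
Import Order.TTheory GRing.Theory Num.Theory.
Import numFieldNormedType.Exports.
Local Open Scope ring_scope.


Section Alg.
Variable R : realType.
Notation vec := 'rV[R]_3.

Lemma ord3 (j : 'I_3) : j = inord 0 \/ j = inord 1 \/ j = inord 2.
Proof.
case: j => [[|[|[|n]]] Hn].
- by left; apply/val_inj; rewrite /= inordK.
- by right; left; apply/val_inj; rewrite /= inordK.
- by right; right; apply/val_inj; rewrite /= inordK.
- by [].
Qed.

Lemma dotpE (u w : vec) : dotp u w =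
  u 0 (inord 0) * w 0 (inord 0) + u 0 (inord 1) * w 0 (inord 1) + u 0 (inord 2) * w 0 (inord 2).
Proof.
rewrite /dotp !big_ord_recl big_ord0 addr0 addrA.
by congr (_ + _ + _); congr (u 0 _ * w 0 _); apply/val_inj; rewrite /= inordK.
Qed.

Lemma crossE (u w : vec) j : cross u w 0 j = co u j.+1 * co w j.+2 - co u j.+2 * co w j.+1.
Proof. by rewrite mxE. Qed.

Lemma cross0 (u w : vec) : cross u w 0 (inord 0) =
  u 0 (inord 1) * w 0 (inord 2) - u 0 (inord 2) * w 0 (inord 1).
Proof. by rewrite crossE inordK. Qed.
Lemma cross1 (u w : vec) : cross u w 0 (inord 1) =
  u 0 (inord 2) * w 0 (inord 0) - u 0 (inord 0) * w 0 (inord 2).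
Proof. by rewrite crossE inordK. Qed.
Lemma cross2 (u w : vec) : cross u w 0 (inord 2) =
  u 0 (inord 0) * w 0 (inord 1) - u 0 (inord 1) * w 0 (inord 0).
Proof. by rewrite crossE inordK. Qed.

Ltac ex := rewrite ?dotpE ?cross0 ?cross1 ?cross2 ?mxE ?cross0 ?cross1 ?cross2.

Lemma lagrange (a b : vec) : dotp (cross a b) (cross a b) = dotp a a * dotp b b - dotp a b ^+ 2.
Proof. ex; ring. Qed.

Lemma gram (a b c l : vec) : dotp (cross a b) (cross a b) * dotp c l =
  (dotp b b * dotp a c - dotp a b * dotp b c) * dotp a l
  + (dotp a a * dotp b c - dotp a b * dotp a c) * dotp b l
  + dotp (cross a b) c * dotp (cross a b) l.
Proof. ex; ring. Qed.

Lemma gram_cross (a b c l : vec) : dotp (cross a b) (cross a b) * dotp (cross a c) l =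
  (dotp a a * dotp b c - dotp a b * dotp a c) * dotp (cross a b) l
  + dotp (cross a b) c * (dotp a b * dotp a l - dotp a a * dotp b l).
Proof. ex; ring. Qed.

Lemma dotpC (u w : vec) : dotp u w = dotp w u.
Proof. ex; ring. Qed.

Lemma dotpZ k (u w : vec) : dotp (k *: u) w = k * dotp u w.
Proof. ex; ring. Qed.

Lemma dotp_cross_l (a b : vec) : dotp a (cross a b) = 0.
Proof. ex; ring. Qed.

Lemma cross_self_dot (b l : vec) : dotp (cross b b) l = 0.
Proof. ex; ring. Qed.

Lemma dotp_ge0 (u : vec) : 0 <= dotp u u.
Proof. ex; nra. Qed.

Lemma unit_eq (u w : vec) : dotp u u = 1 -> dotp w w = 1 -> dotp u w = 1 -> u = w.
Proof.
ex => h1 h2 h3; apply/rowP => j; rewrite ?mxE.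
set u0 := u 0 (inord 0) in h1 h3 *; set u1 := u 0 (inord 1) in h1 h3 *; set u2 := u 0 (inord 2) in h1 h3 *.
set w0 := w 0 (inord 0) in h2 h3 *; set w1 := w 0 (inord 1) in h2 h3 *; set w2 := w 0 (inord 2) in h2 h3 *.
have S : (u0 - w0) ^+ 2 + (u1 - w1) ^+ 2 + (u2 - w2) ^+ 2 = 0.
  have -> : (u0 - w0) ^+ 2 + (u1 - w1) ^+ 2 + (u2 - w2) ^+ 2 =
    (u0 * u0 + u1 * u1 + u2 * u2) + (w0 * w0 + w1 * w1 + w2 * w2) - 2 * (u0 * w0 + u1 * w1 + u2 * w2) by ring.
  rewrite h1 h2 h3; ring.
have q0 := sqr_ge0 (u0 - w0); have q1 := sqr_ge0 (u1 - w1); have q2 := sqr_ge0 (u2 - w2).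
have e0 : (u0 - w0) ^+ 2 = 0 by lra.
have e1 : (u1 - w1) ^+ 2 = 0 by lra.
have e2 : (u2 - w2) ^+ 2 = 0 by lra.
move/eqP: e0; rewrite sqrf_eq0 subr_eq0 => /eqP e0.
move/eqP: e1; rewrite sqrf_eq0 subr_eq0 => /eqP e1.
move/eqP: e2; rewrite sqrf_eq0 subr_eq0 => /eqP e2.
by have [->|[->|->]] := ord3 j.
Qed.

Lemma gram_vec (x v b : vec) j : dotp (cross x v) (cross x v) * cross x b 0 j =
  (dotp x x * dotp v b - dotp x v * dotp x b) * cross x v 0 j
  + dotp (cross x v) b * (dotp x v * x 0 j - dotp x x * v 0 j).
Proof. have [->|[->|->]] := ord3 j; ex; ring. Qed.

Lemma crossC_c (x v : vec) j : cross x v 0 j = - cross v x 0 j.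
Proof. have [->|[->|->]] := ord3 j; ex; ring. Qed.

Lemma dotp_crossC (x v b : vec) : dotp (cross x v) b = - dotp b (cross v x).
Proof. ex; ring. Qed.

Lemma frame (x v b : vec) : dotp x x = 1 -> dotp v v = 1 -> dotp x v = 0 -> dotp x b = 0 ->
  - (dotp b v) *: cross v x + dotp b (cross v x) *: v = cross x b
  /\ dotp b b = dotp b (cross v x) ^+ 2 + dotp b v ^+ 2.
Proof.
move=> h1 h2 h3 h4.
have L : dotp (cross x v) (cross x v) = 1 by rewrite lagrange h1 h2 h3; ring.
split; last first.
  have G := gram x v b b.
  rewrite L h1 h2 h3 h4 dotp_crossC (dotpC v b) in G.
  lra.
apply/rowP => j; rewrite !mxE.
have G := gram_vec x v b j.
rewrite L h1 h3 h4 crossC_c dotp_crossC (dotpC v b) !mxE in G.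
lra.
Qed.
End Alg.

Lemma cross_bb (R : realType) (u : 'rV[R]_3) : cross u u = 0.
Proof. by apply/rowP => j; rewrite !mxE; ring. Qed.


Section Der.
Variable R : realType.
Notation vec := 'rV[R]_3.

Lemma deq1 (f : R -> R) (s df df' : R) : is_derive s 1 f df -> df = df' -> is_derive s 1 f df'.
Proof. by move=> h <-. Qed.

Lemma dM (f g : R -> R) (s df dg : R) : is_derive s 1 f df -> is_derive s 1 g dg ->
  is_derive s 1 (fun t => f t * g t) (df * g s + f s * dg).
Proof.
move=> hf hg.
have h : is_derive s 1 (fun t => f t * g t) (f s *: dg + g s *: df) := is_deriveM hf hg.
by apply: deq1 h _; rewrite /GRing.scale /=; ring.
Qed.

Lemma dD (f g : R -> R) (s df dg : R) : is_derive s 1 f df -> is_derive s 1 g dg ->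
  is_derive s 1 (fun t => f t + g t) (df + dg).
Proof. move=> hf hg; exact: (is_deriveD hf hg). Qed.

Lemma dB (f g : R -> R) (s df dg : R) : is_derive s 1 f df -> is_derive s 1 g dg ->
  is_derive s 1 (fun t => f t - g t) (df - dg).
Proof. move=> hf hg; exact: (is_deriveB hf hg). Qed.

Lemma dC (c s : R) : is_derive s 1 (fun _ : R => c) 0.
Proof. exact: is_derive_cst. Qed.

Lemma dV (f : R -> R) (s df : R) : f s != 0 -> is_derive s 1 f df ->
  is_derive s 1 (fun t => (f t)^-1) (- df / (f s ^+ 2)).
Proof.
move=> h hf; have := is_deriveV h hf; move/deq1; apply.
by rewrite /GRing.scale /= mulNr mulrC mulNr.
Qed.

Lemma dS (f : R -> R) (s df : R) : 0 < f s -> is_derive s 1 f df ->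
  is_derive s 1 (fun t => Num.sqrt (f t)) (df / (2 * Num.sqrt (f s))).
Proof.
move=> h hf; have hs := is_derive1_sqrt h.
have := is_derive1_comp hs hf; move/deq1; apply.
by rewrite mulrC.
Qed.

Lemma dcomp (U : R -> vec) (s : R) k : derivable U s 1 ->
  is_derive s 1 (fun t => U t 0 k) (derive1 U s 0 k).
Proof.
move=> dU; have /derivable_mxP dc := dU.
apply: DeriveDef; first exact: dc.
by rewrite derive1E derive_mx // mxE.
Qed.

End Der.


Section DerV.
Variable R : realType.
Notation vec := 'rV[R]_3.

Lemma L_dot (U W : R -> vec) (s : R) : derivable U s 1 -> derivable W s 1 ->
  is_derive s 1 (fun t => dotp (U t) (W t))
    (dotp (derive1 U s) (W s) + dotp (U s) (derive1 W s)).
Proof.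
move=> dU dW.
have -> : (fun t => dotp (U t) (W t)) = fun t =>
  U t 0 (inord 0) * W t 0 (inord 0) + U t 0 (inord 1) * W t 0 (inord 1)
  + U t 0 (inord 2) * W t 0 (inord 2) by apply/funext => t; rewrite dotpE.
apply: deq1.
  apply: dD; first apply: dD; apply: dM; exact: dcomp.
rewrite !dotpE; ring.
Qed.

Lemma L_dotc (U : R -> vec) (l : vec) (s : R) : derivable U s 1 ->
  is_derive s 1 (fun t => dotp (U t) l) (dotp (derive1 U s) l).
Proof.
move=> dU; have := @L_dot U (fun _ => l) s dU (derivable_cst l s 1).
move/deq1; apply.
rewrite (derive1_cst l s); rewrite [dotp (U s) 0]dotpE !mxE; ring.
Qed.

Lemma Lcc (U W : R -> vec) (s : R) i j : derivable U s 1 -> derivable W s 1 ->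
  is_derive s 1 (fun x => cross (U x) (W x) i j)
    ((cross (derive1 U s) (W s) + cross (U s) (derive1 W s)) i j).
Proof.
move=> dU dW.
have -> : (fun x => cross (U x) (W x) i j) = (fun x => co (U x) j.+1 * co (W x) j.+2 - co (U x) j.+2 * co (W x) j.+1)
  by apply/funext => x; rewrite mxE.
apply: deq1.
  by apply: dB; apply: dM; exact: dcomp.
rewrite !mxE /co; ring.
Qed.

Lemma L_cross (U W : R -> vec) (s : R) : derivable U s 1 -> derivable W s 1 ->
  derivable (fun t => cross (U t) (W t)) s 1 /\
  derive1 (fun t => cross (U t) (W t)) s = cross (derive1 U s) (W s) + cross (U s) (derive1 W s).
Proof.
move=> dU dW.
have dc : derivable (fun t => cross (U t) (W t)) s 1.
  by apply/derivable_mxP => i j; case: (Lcc U W s i j dU dW).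
split => //.
rewrite derive1E derive_mx //; apply/matrixP => i j; rewrite mxE.
have h := Lcc U W s i j dU dW. exact: (@derive_val _ _ _ _ _ _ _ h).
Qed.

End DerV.


Section Tools.
Local Open Scope classical_set_scope.
Local Open Scope ring_scope.
Variable R : realType.
Variables (a b : R).

Lemma deqI (F G : R -> R) (s dF dG : R) : (forall t, a < t < b -> F t = G t) -> a < s < b ->
  is_derive s 1 F dF -> is_derive s 1 G dG -> dF = dG.
Proof.
move=> FG Is hF hG.
have nr : \forall z \near s, F z = G z.
  have : s \in `]a, b[ by rewrite in_itv /=.
  move/(near_in_itvoo (a := a) (b := b)); apply: filterS => z.
  by rewrite in_itv /= => /FG.
have hG' := near_eq_is_derive nr hF.
by rewrite -(@derive_val _ _ _ _ _ _ _ hG') (@derive_val _ _ _ _ _ _ _ hG).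
Qed.

Lemma cstI (F : R -> R) : (forall t, a < t < b -> is_derive t 1 F 0) ->
  forall s1 s2, a < s1 < b -> a < s2 < b -> F s1 = F s2.
Proof.
move=> HF.
suff W : forall s1 s2, s1 <= s2 -> a < s1 < b -> a < s2 < b -> F s1 = F s2.
  move=> s1 s2 I1 I2; case: (leP s1 s2) => h; first exact: W.
  by apply/esym/W => //; apply: ltW.
move=> s1 s2 le12 /andP[a1 b1] /andP[a2 b2].
have [| |c _ ] := @MVT_segment R F (fun _ => 0) s1 s2 le12.
- move=> x; rewrite in_itv /= => /andP[h1 h2]; apply: HF.
  apply/andP; split; [exact: lt_trans h1| exact: lt_trans b2].
- apply: continuous_in_subspaceT => x; rewrite inE /= in_itv /= => /andP[h1 h2].
  have Ix : a < x < b by apply/andP; split; [exact: lt_le_trans h1 | exact: le_lt_trans b2].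
  have := HF x Ix; case => dx _.
  exact/differentiable_continuous/derivable1_diffP.
- by rewrite mul0r => /eqP; rewrite subr_eq0 => /eqP.
Qed.

Lemma twoval (F : R -> R) (c : R) : c != 0 ->
  (forall t, a < t < b -> derivable F t 1) ->
  (forall t, a < t < b -> F t = 0 \/ F t = c) ->
  forall s1 s2, a < s1 < b -> a < s2 < b -> F s1 = F s2.
Proof.
move=> c0 dF HF.
suff W : forall s1 s2, s1 <= s2 -> a < s1 < b -> a < s2 < b -> F s1 = F s2.
  move=> s1 s2 I1 I2; case: (leP s1 s2) => h; first exact: W.
  by apply/esym/W => //; apply: ltW.
move=> s1 s2 le12 I1 I2.
have /andP[a1 b1] := I1; have /andP[a2 b2] := I2.
have cont : {within `[s1, s2], continuous F}.
  apply: continuous_in_subspaceT => x; rewrite inE /= in_itv /= => /andP[h1 h2].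
  have Ix : a < x < b by apply/andP; split; [exact: lt_le_trans h1 | exact: le_lt_trans b2].
  exact/differentiable_continuous/derivable1_diffP/dF.
case: (HF _ I1) => e1; case: (HF _ I2) => e2; rewrite ?e1 ?e2 //.
- have [| t tI ft] := @IVT R F s1 s2 (c / 2) le12 cont.
    rewrite e1 e2; case: (ltgtP 0 c) => hc; try (by apply/andP; split; lra); by move: c0; rewrite -hc eqxx.
  have /andP[h1 h2] : s1 <= t <= s2 by move: tI; rewrite in_itv.
  have It : a < t < b by apply/andP; split; [exact: lt_le_trans h1 | exact: le_lt_trans b2].
  exfalso; case: (HF _ It); rewrite ft => h.
    by move/eqP: c0; apply; lra.
  by move/eqP: c0; apply; lra.
- have [| t tI ft] := @IVT R F s1 s2 (c / 2) le12 cont.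
    rewrite e1 e2; case: (ltgtP 0 c) => hc; try (by apply/andP; split; lra); by move: c0; rewrite -hc eqxx.
  have /andP[h1 h2] : s1 <= t <= s2 by move: tI; rewrite in_itv.
  have It : a < t < b by apply/andP; split; [exact: lt_le_trans h1 | exact: le_lt_trans b2].
  exfalso; case: (HF _ It); rewrite ft => h.
    by move/eqP: c0; apply; lra.
  by move/eqP: c0; apply; lra.
Qed.

End Tools.


Arguments dotpE {R}.
Arguments lagrange {R}.
Arguments gram {R}.
Arguments gram_cross {R}.
Arguments dotpC {R}.
Arguments dotpZ {R}.
Arguments dotp_cross_l {R}.
Arguments cross_self_dot {R}.
Arguments dotp_ge0 {R}.
Arguments unit_eq {R}.
Arguments frame {R}.
Arguments deq1 {R}.
Arguments dM {R}.
Arguments dD {R}.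
Arguments dB {R}.
Arguments dC {R}.
Arguments dV {R}.
Arguments dS {R}.
Arguments dcomp {R}.
Arguments L_dot {R}.
Arguments L_dotc {R}.
Arguments Lcc {R}.
Arguments L_cross {R}.
Arguments deqI {R}.
Arguments cstI {R}.
Arguments twoval {R}.

Section Main.
Variable R : realType.
Notation vec := 'rV[R]_3.
Variables (a b : R) (c xi v : R -> vec).
Hypothesis Hcfg : myller_config a b c xi v.
Hypothesis Hgk : forall s, a < s < b -> (myG xi v s, myK xi v s) != (0, 0).

Let x1 := derive1 xi.
Let x2 := derive1 x1.
Let bb s := dotp (x1 s) (x1 s).
Let U s := cross (xi s) (x1 s).
Let D s := dotp (U s) (x2 s).
Let N s := Num.sqrt (bb s).
Let h (l : vec) s := dotp (U s) l / N s.

Lemma dx0 s : a < s < b -> derivable xi s 1.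
Proof. by case: Hcfg => _ [_ [H _]] Is; exact: (H 0%N s Is). Qed.
Lemma dx1 s : a < s < b -> derivable x1 s 1.
Proof. by case: Hcfg => _ [_ [H _]] Is; exact: (H 1%N s Is). Qed.
Lemma dx2 s : a < s < b -> derivable x2 s 1.
Proof. by case: Hcfg => _ [_ [H _]] Is; exact: (H 2%N s Is). Qed.

Lemma aa s : a < s < b -> dotp (xi s) (xi s) = 1.
Proof. by case: Hcfg => _ [_ [_ [_ H]]] Is; case: (H s Is). Qed.

Lemma ab s : a < s < b -> dotp (xi s) (x1 s) = 0.
Proof.
move=> Is.
have := @deqI _ a b (fun t => dotp (xi t) (xi t)) (fun _ => 1) s _ _ aa Is
  (L_dot xi xi s (dx0 s Is) (dx0 s Is)) (dC 1 s).
rewrite (dotpC (x1 s)) => /eqP; rewrite -mulr2n mulrn_eq0 /= => /eqP.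
by rewrite dotpC.
Qed.

Lemma bbac s : a < s < b -> bb s + dotp (xi s) (x2 s) = 0.
Proof.
move=> Is.
exact: (@deqI _ a b (fun t => dotp (xi t) (x1 t)) (fun _ => 0) s _ _ ab Is
  (L_dot xi x1 s (dx0 s Is) (dx1 s Is)) (dC 0 s)).
Qed.

Lemma cfg_s s : a < s < b -> [/\ dotp (xi s) (xi s) = 1, dotp (v s) (v s) = 1 & dotp (xi s) (v s) = 0].
Proof. by case: Hcfg => _ [_ [_ [_ H]]] Is; case: (H s Is). Qed.

Lemma bpos s : a < s < b -> 0 < bb s.
Proof.
move=> Is; have [h1 h2 h3] := cfg_s _ Is.
have [_ E] := frame _ _ _ h1 h2 h3 (ab _ Is).
have := Hgk _ Is; rewrite /myG /myK /frame_mu -/x1.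
move=> HGK; set G := dotp (x1 s) (cross (v s) (xi s)) in HGK E; set K := dotp (x1 s) (v s) in HGK E.
rewrite /bb; case: (ltP 0 (dotp (x1 s) (x1 s))) => // hle; exfalso.
have q1 := sqr_ge0 G; have q2 := sqr_ge0 K.
have g0 : G ^+ 2 = 0 by lra.
have k0 : K ^+ 2 = 0 by lra.
move/eqP: g0; rewrite sqrf_eq0 => /eqP g0.
move/eqP: k0; rewrite sqrf_eq0 => /eqP k0.
by move: HGK; rewrite g0 k0 eqxx.
Qed.

Lemma uu s : a < s < b -> dotp (U s) (U s) = bb s.
Proof. by move=> Is; rewrite /U lagrange (aa _ Is) (ab _ Is); rewrite /bb; ring. Qed.

Lemma wN s : a < s < b -> unit_ND_vector xi v s = (N s)^-1 *: U s.
Proof.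
move=> Is; have [h1 h2 h3] := cfg_s _ Is.
have [E _] := frame _ _ _ h1 h2 h3 (ab _ Is).
have ND : ND_vector xi v s = U s by rewrite /ND_vector /myK /myG /frame_mu -/x1 E.
by rewrite /unit_ND_vector ND (uu _ Is).
Qed.

Lemma hval s l : a < s < b -> dotp (unit_ND_vector xi v s) l = h l s.
Proof. by move=> Is; rewrite (wN _ Is) dotpZ mulrC. Qed.

Lemma hder s l : a < s < b ->
  is_derive s 1 (h l) (- (D s * dotp (x1 s) l) / (bb s * N s)).
Proof.
move=> Is.
have [dUd dUv] := L_cross xi x1 s (dx0 s Is) (dx1 s Is).
have dul := L_dotc U l s dUd.
have dbb := L_dot x1 x1 s (dx1 s Is) (dx1 s Is).
have bp := bpos _ Is.
have dN := dS (fun t => dotp (x1 t) (x1 t)) s _ bp dbb.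
have Nn0 : N s != 0 by rewrite /N sqrtr_eq0 -ltNge.
have dNi := dV _ s _ Nn0 dN.
have total := dM _ _ s _ _ dul dNi.
apply: deq1 total _.
have e : derive1 U s = cross (x1 s) (x1 s) + cross (xi s) (x2 s) := dUv.
rewrite e cross_bb add0r (dotpC (x2 s) (x1 s)).
have G := gram_cross (xi s) (x1 s) (x2 s) l.
rewrite -/(U s) (uu _ Is) (aa _ Is) (ab _ Is) -/(D s) in G.
have N2 : N s ^+ 2 = bb s by rewrite /N sqr_sqrtr // ltW.
rewrite -/(bb s) -/(N s) -/(bb s).
rewrite -N2 in G *.
have -> : D s * dotp (x1 s) l = dotp (x1 s) (x2 s) * dotp (U s) l - N s ^+ 2 * dotp (cross (xi s) (x2 s)) l by lra.
by field.
Qed.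


Lemma Nn0 s : a < s < b -> N s != 0.
Proof. by move=> Is; rewrite /N sqrtr_eq0 -ltNge; exact: bpos. Qed.

Lemma N2 s : a < s < b -> N s ^+ 2 = bb s.
Proof. by move=> Is; rewrite /N sqr_sqrtr // ltW //; exact: bpos. Qed.

Lemma unit1 s : a < s < b -> dotp (unit_ND_vector xi v s) (unit_ND_vector xi v s) = 1.
Proof.
move=> Is; rewrite (wN _ Is) dotpZ dotpC dotpZ (uu _ Is) -(N2 _ Is).
have := Nn0 _ Is => n0; by field.
Qed.

Lemma hconst_of l : (forall t, a < t < b -> D t * dotp (x1 t) l = 0) ->
  forall s1 s2, a < s1 < b -> a < s2 < b -> h l s1 = h l s2.
Proof.
move=> H; apply: cstI => t It; apply: deq1 (hder t l It) _.
by rewrite (H t It) oppr0 mul0r.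
Qed.

Lemma Dg0 l k : (forall t, a < t < b -> h l t = k) ->
  forall t, a < t < b -> D t * dotp (x1 t) l = 0.
Proof.
move=> H t It.
have := @deqI _ a b (h l) (fun _ => k) t _ _ H It (hder t l It) (dC k t).
have bp := bpos _ It; have n0 := Nn0 _ It.
move=> E; apply/eqP; rewrite -oppr_eq0; apply/eqP.
have : (- (D t * dotp (x1 t) l) / (bb t * N t)) * (bb t * N t) = 0 by rewrite E mul0r.
rewrite mulfVK //; rewrite mulf_neq0 // lt0r_neq0 //.
Qed.

Lemma midI : a < (a + b) / 2 < b.
Proof. by case: Hcfg => ab' _; apply/andP; split; lra. Qed.

Lemma dir2 : xi_helix a b xi -> Wn_helix a b xi v.
Proof.
case=> d [hd [c0 Hc]].
have bd t : a < t < b -> dotp (x1 t) d = 0.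
  move=> It; exact: (@deqI _ a b (fun t => dotp (xi t) d) (fun _ => c0) t _ _ Hc It
    (L_dotc xi d t (dx0 t It)) (dC c0 t)).
exists d; split => //; exists (h d ((a + b) / 2)) => s Is.
rewrite (hval _ _ Is); apply: hconst_of => //; last exact: midI; move=> t It.
by rewrite bd // mulr0.
Qed.


Lemma dir1 : Wn_helix a b xi v -> xi_helix a b xi.
Proof.
case=> l [hl [k Hk]].
have Hh t : a < t < b -> h l t = k by move=> It; rewrite -(hval _ _ It) Hk.
have DG := Dg0 _ _ Hh.
have ul t : a < t < b -> dotp (U t) l = k * N t.
  move=> It; rewrite -(Hh t It) /h divfK //; exact: Nn0.
have I1 t : a < t < b ->
  bb t = bb t * dotp (xi t) l ^+ 2 + dotp (x1 t) l ^+ 2 + k ^+ 2 * bb t.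
  move=> It; have G := gram (xi t) (x1 t) l l.
  rewrite -/(U t) (uu _ It) hl (aa _ It) (ab _ It) (ul _ It) in G.
  have n2 := N2 _ It; rewrite -/(bb t) in G.
  rewrite -n2 in G *; rewrite -[LHS]mulr1 G; ring.
have [k1|k1] := eqVneq (k ^+ 2) 1.
  exists l; split => //; exists 0 => t It.
  have := I1 t It; rewrite k1 mul1r => E.
  have bp := bpos _ It.
  have q1 := sqr_ge0 (dotp (x1 t) l).
  have q2 : 0 <= bb t * dotp (xi t) l ^+ 2 by apply: mulr_ge0; [exact: ltW | exact: sqr_ge0].
  have e : bb t * dotp (xi t) l ^+ 2 = 0 by lra.
  move/eqP: e; rewrite mulf_eq0 sqrf_eq0 (negbTE (lt0r_neq0 bp)) /= => /eqP //.
have dDt t : a < t < b -> is_derive t 1 D (dotp (derive1 U t) (x2 t) + dotp (U t) (derive1 x2 t)).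
  move=> It; have [dUd _] := L_cross xi x1 t (dx0 t It) (dx1 t It).
  exact: (L_dot U x2 t dUd (dx2 t It)).
pose psi t := (k ^+ 2 * (D t * D t)) * (bb t * (bb t * bb t))^-1.
have dpsi t : a < t < b -> derivable psi t 1.
  move=> It.
  have dbb := L_dot x1 x1 t (dx1 t It) (dx1 t It).
  have hb : bb t * (bb t * bb t) != 0.
    by have bp := bpos _ It; rewrite !mulf_neq0 // lt0r_neq0.
  have := dM _ _ t _ _ (dM _ _ t _ _ (dC (k ^+ 2) t) (dM _ _ t _ _ (dDt t It) (dDt t It)))
     (dV _ t _ hb (dM _ _ t _ _ dbb (dM _ _ t _ _ dbb dbb))).
  by case.
have PZ t : D t = 0 -> psi t = 0 by move=> e; rewrite /psi e !mul0r mulr0 mul0r.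
have PNZ t : a < t < b -> D t != 0 -> psi t = 1 - k ^+ 2.
  move=> It Dn0.
  have bp := bpos _ It; have n0 := Nn0 _ It; have n2 := N2 _ It.
  have g0 : dotp (x1 t) l = 0.
    by move/eqP: (DG t It); rewrite mulf_eq0 (negbTE Dn0) /= => /eqP.
  have cl : dotp (x2 t) l = 0.
    have := @deqI _ a b (fun t => D t * dotp (x1 t) l) (fun _ => 0) t _ _ DG It
      (dM _ _ t _ _ (dDt t It) (L_dotc x1 l t (dx1 t It))) (dC 0 t).
    rewrite g0 mulr0 add0r -/x2 => /eqP; rewrite mulf_eq0 (negbTE Dn0) /= => /eqP //.
  have G := gram (xi t) (x1 t) (x2 t) l.
  rewrite -/(U t) (uu _ It) (aa _ It) (ab _ It) (ul _ It) cl g0 -/(D t) in G.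
  have ac := bbac _ It.
  have f2 : dotp (xi t) l ^+ 2 = 1 - k ^+ 2.
    have := I1 t It; rewrite g0 => E.
    apply: (mulfI (lt0r_neq0 bp)); rewrite mulrBr mulr1; lra.
  have e1 : D t * k * N t = bb t ^+ 2 * dotp (xi t) l.
    rewrite -/(bb t) in G; have ac' : dotp (xi t) (x2 t) = - bb t by lra.
    rewrite ac' in G; rewrite expr2; lra.
  have e2 : k ^+ 2 * (D t * D t) * bb t = bb t ^+ 4 * (1 - k ^+ 2).
    rewrite -f2 -n2; have -> : k ^+ 2 * (D t * D t) * N t ^+ 2 = (D t * k * N t) ^+ 2 by ring.
    by rewrite e1 n2; ring.
  have e3 : k ^+ 2 * (D t * D t) = bb t * (bb t * bb t) * (1 - k ^+ 2).
    apply: (mulIf (lt0r_neq0 bp)); rewrite e2; ring.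
  have hb : bb t * (bb t * bb t) != 0 by rewrite !mulf_neq0 // lt0r_neq0.
  by rewrite /psi e3 mulrAC divff // mul1r.
have k1' : 1 - k ^+ 2 != 0 by rewrite subr_eq0 eq_sym.
have Pc := twoval a b psi (1 - k ^+ 2) k1' dpsi
  (fun t It => match eqVneq (D t) 0 with
               | EqNotNeq e => or_introl (PZ t e)
               | NeqNotEq e => or_intror (PNZ t It e) end).
have I0 := midI; set s0 := (a + b) / 2 in I0.
have [D0|D0] := eqVneq (D s0) 0.
  have Dz t : a < t < b -> D t = 0.
    move=> It; apply/eqP; apply/negP => /negP Dn; have := Pc t s0 It I0.
    by rewrite (PNZ t It Dn) (PZ _ D0) => /eqP; rewrite (negbTE k1').
  pose w0 := unit_ND_vector xi v s0.
  have hw t : a < t < b -> h w0 t = 1.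
    move=> It; rewrite (hconst_of w0 _ t s0 It I0) -?(hval _ _ I0) ?unit1 //.
    by move=> u Iu; rewrite Dz // mul0r.
  have weq t : a < t < b -> unit_ND_vector xi v t = w0.
    move=> It; apply: unit_eq; [exact: unit1 | exact: unit1 | rewrite (hval _ _ It); exact: hw].
  exists w0; split; first exact: unit1.
  exists 0 => t It; rewrite -(weq t It) (wN _ It) dotpC dotpZ dotpC /U dotp_cross_l mulr0 //.
have Pv t : a < t < b -> psi t = 1 - k ^+ 2 by move=> It; rewrite (Pc t s0 It I0) (PNZ _ I0 D0).
have g0 t : a < t < b -> dotp (x1 t) l = 0.
  move=> It; have Dn : D t != 0.
    apply/negP => /eqP e; have := Pv t It; rewrite PZ // => /eqP; by rewrite eq_sym (negbTE k1').
  by move/eqP: (DG t It); rewrite mulf_eq0 (negbTE Dn) /= => /eqP.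
exists l; split => //; exists (dotp (xi s0) l) => t It.
apply: (cstI a b (fun t => dotp (xi t) l)) => // u Iu.
apply: deq1 (L_dotc xi l u (dx0 u Iu)) _; exact: g0.
Qed.

Lemma main_equiv : Wn_helix a b xi v <-> xi_helix a b xi.
Proof. split; [exact: dir1 | exact: dir2]. Qed.

End Main.


Theorem theorem13 (R : realType) (a b : R) (c xi v : R -> 'rV[R]_3) :
  myller_config a b c xi v ->
  (forall s, a < s < b -> (myG xi v s, myK xi v s) != (0, 0)) ->
  (Wn_helix a b xi v <-> xi_helix a b xi).
Proof.
move=> H1 H2; exact: (main_equiv _ _ _ _ _ _ H1 H2).
Qed.
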